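(* Let $G$ be a finite simple graph and $L_G$ its holonomy Lie algebra. Let $v$ be a vertex of $G$, let $V$ be the set of edges of $G$ incident to $v$, let $K$ be the set of edges of $G$ both of whose endpoints are neighbours of $v$, and let $G_2$ be the graph with edge set $E(G)\setminus V$. Let $\pi:L_G\to L_{G_2}$ be the (well-defined) Lie homomorphism sending each edge in $V$ to $0$ and each other edge to itself. If $K$ is complete (i.e. any two distinct neighbours of $v$ are joined by an edge of $G$), then $\ker\pi$ is a free Lie algebra freely generated by the (images of the) edges in $V$.
   Context: All Lie algebras are over a fixed field. A triangle in a graph is a set of three edges forming a cycle of length 3. For a finite simple graph $G$ with edge set $E(G)$, the holonomy Lie algebra $L_G$ is the free Lie algebra on $E(G)$ modulo the relations $[x,y]=0$ for every pair of distinct edges $x,y$ not contained in a common triangle, and $[a,b]=[b,c]=[c,a]$ for every triangle $\{a,b,c\}$. $L_{G_2}$ is defined in the same way for the graph $G_2$. *)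

(* Defs.v *)
From HB Require Import structures.
From mathcomp Require Import all_boot all_order all_algebra.
Set Implicit Arguments. Unset Strict Implicit. Unset Printing Implicit Defensive.
Import GRing.Theory.
Local Open Scope ring_scope.

Record lieAlgebra (K : fieldType) := LieAlgebra {
  lie_carrier :> lmodType K;
  lie_br : lie_carrier -> lie_carrier -> lie_carrier;
  lie_brDl : forall (a : K) (x y z : lie_carrier),
      lie_br (a *: x + y) z = a *: lie_br x z + lie_br y z;
  lie_brDr : forall (a : K) (x y z : lie_carrier),
      lie_br z (a *: x + y) = a *: lie_br z x + lie_br z y;
  lie_br_alt : forall x : lie_carrier, lie_br x x = 0;
  lie_jacobi : forall x y z : lie_carrier,
      lie_br x (lie_br y z) + lie_br y (lie_br z x) + lie_br z (lie_br x y) = 0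
}.

Section Defs.
Variable K : fieldType.

Definition lie_hom (L M : lieAlgebra K) (f : L -> M) : Prop :=
  (forall (a : K) (x y : L), f (a *: x + y) = a *: f x + f y) /\
  (forall x y : L, f (lie_br x y) = lie_br (f x) (f y)).

Variable T : finType.

Definition is_triangle (E : {set {set T}}) (a b c : {set T}) : Prop :=
  exists p q r : T, [&& p != q, q != r & r != p] /\
    a = [set p; q] /\ b = [set q; r] /\ c = [set r; p] /\
    a \in E /\ b \in E /\ c \in E.

Definition holonomy_rel (E : {set {set T}}) (L : lieAlgebra K)
    (x : {set T} -> L) : Prop :=
  (forall a b, a \in E -> b \in E -> a != b ->
      ~ (exists c, is_triangle E a b c) -> lie_br (x a) (x b) = 0) /\
  (forall a b c, is_triangle E a b c ->
      lie_br (x a) (x b) = lie_br (x b) (x c) /\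
      lie_br (x b) (x c) = lie_br (x c) (x a)).

(* (L, iota) is the holonomy Lie algebra of the graph with edge set E:
   the Lie algebra presented by generators E and the holonomy relations,
   i.e. it satisfies the universal property of that presentation. *)
Definition is_holonomy (E : {set {set T}}) (L : lieAlgebra K)
    (iota : {set T} -> L) : Prop :=
  holonomy_rel E iota /\
  forall (M : lieAlgebra K) (f : {set T} -> M), holonomy_rel E f ->
    exists h : L -> M, [/\ lie_hom h,
      (forall e, e \in E -> h (iota e) = f e) &
      (forall h' : L -> M, lie_hom h' ->
         (forall e, e \in E -> h' (iota e) = f e) -> forall y, h' y = h y)].

Definition lie_hom_on (L M : lieAlgebra K) (S : L -> Prop) (h : L -> M) : Prop :=
  forall (a : K) (x y : L), S x -> S y ->
    h (a *: x + y) = a *: h x + h y /\ h (lie_br x y) = lie_br (h x) (h y).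

(* S is a Lie subalgebra of L, and as a Lie algebra it is free, freely
   generated by the family (g i)_{i in I} (universal property). *)
Definition free_on (L : lieAlgebra K) (S : L -> Prop) (I : {set {set T}})
    (g : {set T} -> L) : Prop :=
  [/\ S 0,
      (forall (a : K) x y, S x -> S y -> S (a *: x + y)),
      (forall x y, S x -> S y -> S (lie_br x y)),
      (forall i, i \in I -> S (g i)) &
      forall (M : lieAlgebra K) (f : {set T} -> M),
        exists h : L -> M, [/\ lie_hom_on S h,
          (forall i, i \in I -> h (g i) = f i) &
          (forall h' : L -> M, lie_hom_on S h' ->
             (forall i, i \in I -> h' (g i) = f i) ->
             forall y, S y -> h' y = h y)]].

(* graph given by its edge set E (2-element subsets of T) *)
Definition incident (E : {set {set T}}) (v : T) : {set {set T}} :=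
  [set e in E | v \in e].
Definition neighbours (E : {set {set T}}) (v : T) : {set T} :=
  [set w | [set v; w] \in E].
Definition link_edges (E : {set {set T}}) (v : T) : {set {set T}} :=
  [set e in E | e \subset neighbours E v].
Definition link_complete (E : {set {set T}}) (v : T) : Prop :=
  forall w1 w2, w1 \in neighbours E v -> w2 \in neighbours E v -> w1 != w2 ->
    [set w1; w2] \in link_edges E v.

End Defs.

(* Main.v *)
Require Import Defs.
From HB Require Import structures.
From mathcomp Require Import all_boot all_order all_algebra.
From mathcomp Require Import boolp.
From Stdlib Require Import ClassicalEpsilon ProofIrrelevance.
Set Implicit Arguments. Unset Strict Implicit. Unset Printing Implicit Defensive.
Import GRing.Theory.
Local Open Scope ring_scope.

Section LieTheory.
Variables (K : fieldType) (L : lieAlgebra K).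
Local Notation br := (@lie_br K L).

Lemma br0l (z : L) : br 0 z = 0.
Proof.
have H := lie_brDl 1 0 0 z; rewrite !scale1r addr0 in H.
by apply: (addrI (br 0 z)); rewrite addr0 -H.
Qed.
Lemma br0r (z : L) : br z 0 = 0.
Proof.
have H := lie_brDr 1 0 0 z; rewrite !scale1r addr0 in H.
by apply: (addrI (br z 0)); rewrite addr0 -H.
Qed.
Lemma brDl (x y z : L) : br (x + y) z = br x z + br y z.
Proof. by have := lie_brDl 1 x y z; rewrite !scale1r. Qed.
Lemma brDr (x y z : L) : br z (x + y) = br z x + br z y.
Proof. by have := lie_brDr 1 x y z; rewrite !scale1r. Qed.
Lemma brZl a (x z : L) : br (a *: x) z = a *: br x z.
Proof. by have := lie_brDl a x 0 z; rewrite !addr0 br0l addr0. Qed.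
Lemma brZr a (x z : L) : br z (a *: x) = a *: br z x.
Proof. by have := lie_brDr a x 0 z; rewrite !addr0 br0r addr0. Qed.
Lemma brNl (x z : L) : br (- x) z = - br x z.
Proof. by apply/eqP; rewrite -addr_eq0 -brDl addNr br0l. Qed.
Lemma brNr (x z : L) : br z (- x) = - br z x.
Proof. by apply/eqP; rewrite -addr_eq0 -brDr addNr br0r. Qed.
Lemma brBl (x y z : L) : br (x - y) z = br x z - br y z.
Proof. by rewrite brDl brNl. Qed.
Lemma brBr (x y z : L) : br z (x - y) = br z x - br z y.
Proof. by rewrite brDr brNr. Qed.
Lemma brC (x y : L) : br x y = - br y x.
Proof.
apply/eqP; rewrite -addr_eq0.
have := lie_br_alt (x + y); rewrite brDl !brDr !lie_br_alt add0r addr0.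
by move=> ->.
Qed.
End LieTheory.

(* cancellation tactic for flat right-associated sums *)
Section Pull.
Variable M : zmodType.
Lemma pull_skip (x t r r' : M) : r = t + r' -> x + r = t + (x + r').
Proof. by move=> ->; rewrite addrCA. Qed.
Lemma pull_last (t : M) : t = t + 0.
Proof. by rewrite addr0. Qed.
Lemma cancel_pos (a r r' : M) : r = - a + r' -> r' = 0 -> a + r = 0.
Proof. by move=> -> ->; rewrite addr0 subrr. Qed.
Lemma cancel_neg (a r r' : M) : r = a + r' -> r' = 0 -> - a + r = 0.
Proof. by move=> -> ->; rewrite addr0 addNr. Qed.
Lemma cancel_negl (a : M) : - a + a = 0.
Proof. by rewrite addNr. Qed.
Lemma cancel_posl (a : M) : a + - a = 0.
Proof. by rewrite subrr. Qed.
Lemma zmod_eq_sub (x y : M) : x - y = 0 -> x = y.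
Proof. by move/eqP; rewrite subr_eq0 => /eqP. Qed.
End Pull.

Lemma pull_here (M : zmodType) (t r : M) : t + r = t + r.
Proof. by []. Qed.

Ltac pull t :=
  lazymatch goal with
  | |- ?x + ?r = _ => first [ unify x t; apply: pull_here | eapply pull_skip; pull t ]
  | |- ?x = _ => unify x t; apply: pull_last
  end.

Ltac zcancel :=
  lazymatch goal with
  | |- 0 = 0 => reflexivity
  | |- - ?a + ?r = 0 => eapply cancel_neg; [pull a | zcancel]
  | |- ?a + ?r = 0 => eapply cancel_pos; [pull (- a) | zcancel]
  end.

Ltac znorm := rewrite ?opprD ?opprK ?oppr0 ?addr0 ?add0r -?addrA.
Ltac zsolve := apply: zmod_eq_sub; znorm; zcancel.

Lemma test (M : zmodType) (a b c : M) : a + (b - c) = - c + b + a.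
Proof. zsolve. Qed.

Section FreeLie.
Variables (K : fieldType) (I : Type).

Inductive term := TGen of I | TZero | TAdd of term & term | TOpp of term
  | TScale of K & term | TBr of term & term.

Fixpoint teval (M : lieAlgebra K) (f : I -> M) (t : term) : M :=
  match t with
  | TGen i => f i
  | TZero => 0
  | TAdd a b => teval f a + teval f b
  | TOpp a => - teval f a
  | TScale k a => k *: teval f a
  | TBr a b => lie_br (teval f a) (teval f b)
  end.

Definition tequiv (t s : term) : Prop :=
  forall (M : lieAlgebra K) (f : I -> M), teval f t = teval f s.

Definition canon (t : term) : term := epsilon (inhabits t) (tequiv t).

Lemma canon_spec t : tequiv t (canon t).
Proof. by apply: (epsilon_spec (inhabits t) (tequiv t)); exists t. Qed.

Lemma canon_eq t s : tequiv t s -> canon t = canon s.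
Proof.
move=> ts; rewrite /canon.
have -> : tequiv t = tequiv s.
  apply: funext => u; apply: propext; split => h M f.
    by rewrite -ts h.
  by rewrite ts h.
by rewrite (proof_irrelevance _ (inhabits t) (inhabits s)).
Qed.

Lemma canon_idem t : canon (canon t) = canon t.
Proof. by apply: canon_eq => M f; rewrite -canon_spec. Qed.

Record FL := MkFL { rep : term; rep_canon : canon rep = rep }.

Definition mk (t : term) : FL := @MkFL (canon t) (canon_idem t).

Lemma FL_eq (x y : FL) : rep x = rep y -> x = y.
Proof.
case: x => x hx; case: y => y hy /= exy; subst y.
by rewrite (proof_irrelevance _ hx hy).
Qed.

Lemma mk_rep x : mk (rep x) = x.
Proof. by apply: FL_eq; rewrite /= rep_canon. Qed.

Lemma mk_eq t s : tequiv t s -> mk t = mk s.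
Proof. by move=> ts; apply: FL_eq => /=; apply: canon_eq. Qed.

Lemma teval_canon (M : lieAlgebra K) (f : I -> M) t : teval f (canon t) = teval f t.
Proof. by rewrite -canon_spec. Qed.
Lemma teval_mk (M : lieAlgebra K) (f : I -> M) t : teval f (rep (mk t)) = teval f t.
Proof. exact: teval_canon. Qed.

HB.instance Definition _ := gen_eqMixin FL.
HB.instance Definition _ := gen_choiceMixin FL.

Definition fzero := mk TZero.
Definition fopp x := mk (TOpp (rep x)).
Definition fadd x y := mk (TAdd (rep x) (rep y)).
Definition fscale k x := mk (TScale k (rep x)).
Definition fbr x y := mk (TBr (rep x) (rep y)).

Ltac fl_eq := rewrite /fzero /fopp /fadd /fscale /fbr; apply: mk_eq => M f /=;
  do 3 rewrite ?teval_canon /=.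

Lemma faddA : associative fadd.
Proof. by move=> x y z; fl_eq; rewrite addrA. Qed.
Lemma faddC : commutative fadd.
Proof. by move=> x y; fl_eq; rewrite addrC. Qed.
Lemma fadd0 : left_id fzero fadd.
Proof. by move=> x; rewrite -[RHS]mk_rep; fl_eq; rewrite add0r. Qed.
Lemma faddN : left_inverse fzero fopp fadd.
Proof. by move=> x; fl_eq; rewrite addNr. Qed.

HB.instance Definition _ := GRing.isZmodule.Build FL faddA faddC fadd0 faddN.

Lemma fscaleA a b v : fscale a (fscale b v) = fscale (a * b) v.
Proof. by fl_eq; rewrite scalerA. Qed.
Lemma fscale1 : left_id 1 fscale.
Proof. by move=> x; rewrite -[RHS]mk_rep; fl_eq; rewrite scale1r. Qed.
Lemma fscaleDr : right_distributive fscale +%R.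
Proof. by move=> a x y; rewrite /GRing.add /=; fl_eq; rewrite scalerDr. Qed.
Lemma fscaleDl v : {morph fscale^~ v: a b / a + b}.
Proof. by move=> a b; rewrite {2}/GRing.add /=; fl_eq; rewrite scalerDl. Qed.

HB.instance Definition _ := GRing.Zmodule_isLmodule.Build K FL fscaleA fscale1 fscaleDr fscaleDl.

Lemma fbrDl (a : K) (x y z : FL) : fbr (a *: x + y) z = a *: fbr x z + fbr y z.
Proof. by rewrite /GRing.add /GRing.scale /=; fl_eq; rewrite lie_brDl. Qed.
Lemma fbrDr (a : K) (x y z : FL) : fbr z (a *: x + y) = a *: fbr z x + fbr z y.
Proof. by rewrite /GRing.add /GRing.scale /=; fl_eq; rewrite lie_brDr. Qed.
Lemma fbr_alt (x : FL) : fbr x x = 0.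
Proof. by rewrite /GRing.zero /=; fl_eq; rewrite lie_br_alt. Qed.
Lemma fjacobi (x y z : FL) : fbr x (fbr y z) + fbr y (fbr z x) + fbr z (fbr x y) = 0.
Proof. by rewrite /GRing.add /GRing.zero /=; fl_eq; rewrite lie_jacobi. Qed.

Definition FLie : lieAlgebra K := LieAlgebra fbrDl fbrDr fbr_alt fjacobi.

End FreeLie.

Section FreeLieUniv.
Variables (K : fieldType) (I : Type).
Local Notation F := (FLie K I).

Definition X (i : I) : F := mk (@TGen K I i).
Definition feval (M : lieAlgebra K) (f : I -> M) (x : F) : M := teval f (rep x).

Lemma feval_hom M f : lie_hom (@feval M f).
Proof.
split.
  move=> a x y; rewrite /feval /GRing.add /GRing.scale /=.
  by do 3 rewrite ?teval_canon /=.
move=> x y; rewrite /feval /=.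
by do 3 rewrite ?teval_canon /=.
Qed.

Lemma feval_X M f i : @feval M f (X i) = f i.
Proof. by rewrite /feval /X teval_mk. Qed.

Lemma F_ind (P : F -> Prop) : P 0 ->
  (forall a x y, P x -> P y -> P (a *: x + y)) ->
  (forall x y, P x -> P y -> P (lie_br x y)) ->
  (forall i, P (X i)) -> forall x, P x.
Proof.
move=> P0 PD PB PX x; rewrite -(mk_rep x); elim: (rep x) => [i|||a IHa|k a IHa|a IHa b IHb].
- exact: PX.
- exact: P0.
- move=> a IHa b IHb.
  have -> : mk (TAdd a b) = 1 *: (mk a : F) + mk b.
    rewrite scale1r /GRing.add /=; apply: mk_eq => M f /=.
    by do 3 rewrite ?teval_canon /=.
  exact: PD.
- have -> : mk (TOpp a) = (-1) *: (mk a : F) + 0.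
    rewrite /GRing.add /GRing.scale /GRing.zero /=; apply: mk_eq => M f /=.
    do 3 rewrite ?teval_canon /=.
    by rewrite addr0 scaleN1r.
  exact: PD.
- have -> : mk (TScale k a) = k *: (mk a : F) + 0.
    rewrite /GRing.add /GRing.scale /GRing.zero /=; apply: mk_eq => M f /=.
    do 3 rewrite ?teval_canon /=.
    by rewrite addr0.
  exact: PD.
- have -> : mk (TBr a b) = lie_br (mk a : F) (mk b).
    rewrite /=; apply: mk_eq => M f /=.
    by do 3 rewrite ?teval_canon /=.
  exact: PB.
Qed.

Lemma lie_hom0 (L M : lieAlgebra K) (h : L -> M) :
  (forall a x y, h (a *: x + y) = a *: h x + h y) -> h 0 = 0.
Proof.
move=> hl; have := hl 1 0 0; rewrite !scale1r addr0 => H.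
by apply: (addrI (h 0)); rewrite addr0 -H.
Qed.

Lemma F_hom_unique (M : lieAlgebra K) (h1 h2 : F -> M) :
  lie_hom h1 -> lie_hom h2 -> (forall i, h1 (X i) = h2 (X i)) -> forall x, h1 x = h2 x.
Proof.
move=> [l1 b1] [l2 b2] hX; apply: F_ind => //.
- by rewrite !lie_hom0.
- by move=> a x y e1 e2; rewrite l1 l2 e1 e2.
- by move=> x y e1 e2; rewrite b1 b2 e1 e2.
Qed.
End FreeLieUniv.

Lemma eq0_sum3 (M : zmodType) (S A B C : M) : S = A + B + C -> A = 0 -> B = 0 -> C = 0 -> S = 0.
Proof. by move=> -> -> -> ->; rewrite !addr0. Qed.

Lemma pairZ (K : fieldType) (V W : lmodType K) (a : K) (u : V) (w : W) :
  a *: ((u, w) : (V * W)%type) = (a *: u, a *: w).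
Proof. by []. Qed.
Lemma pairD (V W : zmodType) (u u' : V) (w w' : W) :
  ((u, w) : (V * W)%type) + (u', w') = (u + u', w + w').
Proof. by []. Qed.
Lemma pair0 (V W : zmodType) : (0 : (V * W)%type) = (0, 0).
Proof. by []. Qed.

Section DualNumbers.
Variables (K : fieldType) (L : lieAlgebra K).
Local Notation br := (@lie_br K L).

Definition dnbr (p q : (L * L)%type) : (L * L)%type :=
  (br p.1 q.1, br p.1 q.2 + br p.2 q.1).

Lemma dnbrDl (a : K) (x y z : (L * L)%type) : dnbr (a *: x + y) z = a *: dnbr x z + dnbr y z.
Proof.
case: x => x1 x2; case: y => y1 y2; case: z => z1 z2; rewrite /dnbr /= ?pairZ ?pairD ?pair0.
congr (_, _); first by rewrite lie_brDl.
rewrite !lie_brDl scalerDr; zsolve.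
Qed.
Lemma dnbrDr (a : K) (x y z : (L * L)%type) : dnbr z (a *: x + y) = a *: dnbr z x + dnbr z y.
Proof.
case: x => x1 x2; case: y => y1 y2; case: z => z1 z2; rewrite /dnbr /= ?pairZ ?pairD ?pair0.
congr (_, _); first by rewrite lie_brDr.
rewrite !lie_brDr scalerDr; zsolve.
Qed.
Lemma dnbr_alt (x : (L * L)%type) : dnbr x x = 0.
Proof.
case: x => x1 x2; rewrite /dnbr /= lie_br_alt [br x2 x1]brC subrr //.
Qed.
Lemma dnjacobi (x y z : (L * L)%type) :
  dnbr x (dnbr y z) + dnbr y (dnbr z x) + dnbr z (dnbr x y) = 0.
Proof.
case: x => x1 x2; case: y => y1 y2; case: z => z1 z2; rewrite /dnbr /= ?pairZ ?pairD ?pair0.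
congr (_, _); first by rewrite lie_jacobi.
apply: (eq0_sum3 _ (lie_jacobi x2 y1 z1) (lie_jacobi x1 y2 z1) (lie_jacobi x1 y1 z2)).
rewrite !brDr; zsolve.
Qed.

Definition DN : lieAlgebra K := LieAlgebra dnbrDl dnbrDr dnbr_alt dnjacobi.
End DualNumbers.

Lemma ffunZE (K : fieldType) (I : finType) (V : lmodType K) a (f : {ffun I -> V}) i : (a *: f) i = a *: f i.
Proof. by rewrite ffunE. Qed.
Lemma ffunDE (I : finType) (V : zmodType) (f g : {ffun I -> V}) i : (f + g) i = f i + g i.
Proof. by rewrite ffunE. Qed.
Lemma ffun0E (I : finType) (V : zmodType) i : (0 : {ffun I -> V}) i = 0.
Proof. by rewrite ffunE. Qed.

Lemma lin0 (K : fieldType) (V W : lmodType K) (h : V -> W) :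
  (forall a x y, h (a *: x + y) = a *: h x + h y) -> h 0 = 0.
Proof.
move=> hl; have := hl 1 0 0; rewrite !scale1r addr0 => H.
by apply: (addrI (h 0)); rewrite addr0 -H.
Qed.
Lemma linD (K : fieldType) (V W : lmodType K) (h : V -> W) :
  (forall a x y, h (a *: x + y) = a *: h x + h y) -> forall x y, h (x + y) = h x + h y.
Proof. by move=> hl x y; have := hl 1 x y; rewrite !scale1r. Qed.
Lemma linZ (K : fieldType) (V W : lmodType K) (h : V -> W) :
  (forall a x y, h (a *: x + y) = a *: h x + h y) -> forall a x, h (a *: x) = a *: h x.
Proof. by move=> hl a x; have := hl a x 0; rewrite !addr0 (lin0 hl) addr0. Qed.
Lemma linN (K : fieldType) (V W : lmodType K) (h : V -> W) :
  (forall a x y, h (a *: x + y) = a *: h x + h y) -> forall x, h (- x) = - h x.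
Proof. by move=> hl x; rewrite -scaleN1r (linZ hl) scaleN1r. Qed.
Lemma linB (K : fieldType) (V W : lmodType K) (h : V -> W) :
  (forall a x y, h (a *: x + y) = a *: h x + h y) -> forall x y, h (x - y) = h x - h y.
Proof. by move=> hl x y; rewrite (linD hl) (linN hl). Qed.

Section Derivations.
Variables (K : fieldType) (I : finType).
Local Notation F := (FLie K I).
Local Notation br := (@lie_br K F).
Local Notation XX := (@X K I).

Definition ext (d : {ffun I -> F}) (x : F) : F :=
  (feval (M := DN F) (fun i => (XX i, d i)) x).2.

Lemma ext_fst (d : {ffun I -> F}) x : (feval (M := DN F) (fun i => (XX i, d i)) x).1 = x.
Proof.
have [hl hb] := feval_hom (M := DN F) (fun i => (XX i, d i)).
elim/F_ind: x.
- by rewrite (lin0 hl).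
- by move=> a x y ex ey; rewrite hl /= ex ey.
- by move=> x y ex ey; rewrite hb /= ex ey.
- by move=> i; rewrite feval_X.
Qed.

Lemma ext_lin d a x y : ext d (a *: x + y) = a *: ext d x + ext d y.
Proof.
have [hl hb] := feval_hom (M := DN F) (fun i => (XX i, d i)).
by rewrite /ext hl.
Qed.

Lemma ext_der d x y : ext d (br x y) = br x (ext d y) + br (ext d x) y.
Proof.
have [hl hb] := feval_hom (M := DN F) (fun i => (XX i, d i)).
by rewrite /ext hb /= !ext_fst.
Qed.

Lemma ext_X d i : ext d (XX i) = d i.
Proof. by rewrite /ext feval_X. Qed.

Lemma ext0 d : ext d 0 = 0. Proof. exact: lin0 (@ext_lin d). Qed.
Lemma extD d x y : ext d (x + y) = ext d x + ext d y. Proof. exact: (linD (@ext_lin d) x y). Qed.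
Lemma extZ d a x : ext d (a *: x) = a *: ext d x. Proof. exact: (linZ (@ext_lin d) a x). Qed.
Lemma extN d x : ext d (- x) = - ext d x. Proof. exact: (linN (@ext_lin d) x). Qed.
Lemma extB d x y : ext d (x - y) = ext d x - ext d y. Proof. exact: (linB (@ext_lin d) x y). Qed.

Lemma ext_unique (d : {ffun I -> F}) (D : F -> F) :
  (forall a x y, D (a *: x + y) = a *: D x + D y) ->
  (forall x y, D (br x y) = br x (D y) + br (D x) y) ->
  (forall i, D (XX i) = d i) -> forall x, D x = ext d x.
Proof.
move=> hl hb hX; elim/F_ind.
- by rewrite (lin0 hl) ext0.
- by move=> a x y ex ey; rewrite hl ext_lin ex ey.
- by move=> x y ex ey; rewrite hb ext_der ex ey.
- by move=> i; rewrite hX ext_X.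
Qed.

Definition dbr (d1 d2 : {ffun I -> F}) : {ffun I -> F} :=
  [ffun i => ext d1 (d2 i) - ext d2 (d1 i)].

Lemma ext_dbr d1 d2 x : ext (dbr d1 d2) x = ext d1 (ext d2 x) - ext d2 (ext d1 x).
Proof.
rewrite -(@ext_unique (dbr d1 d2) (fun x => ext d1 (ext d2 x) - ext d2 (ext d1 x))) //.
- by move=> a y z; rewrite !ext_lin scalerBr; zsolve.
- by move=> y z; rewrite !ext_der !extD !ext_der !brBl !brBr; zsolve.
- by move=> i; rewrite !ext_X ffunE.
Qed.

Lemma ext_lind a d1 d2 x : ext (a *: d1 + d2) x = a *: ext d1 x + ext d2 x.
Proof.
rewrite -(@ext_unique (a *: d1 + d2) (fun x => a *: ext d1 x + ext d2 x)) //.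
- by move=> b y z; rewrite !ext_lin !scalerDr !scalerA mulrC; zsolve.
- by move=> y z; rewrite !ext_der !brDl !brDr !brZl !brZr scalerDr; zsolve.
- by move=> i; rewrite !ext_X ffunDE ffunZE.
Qed.

Lemma dbrDl (a : K) (x y z : {ffun I -> F}) : dbr (a *: x + y) z = a *: dbr x z + dbr y z.
Proof.
apply/ffunP => i; rewrite ffunDE ffunZE !ffunE ext_lind ext_lin scalerBr.
zsolve.
Qed.
Lemma dbrDr (a : K) (x y z : {ffun I -> F}) : dbr z (a *: x + y) = a *: dbr z x + dbr z y.
Proof.
apply/ffunP => i; rewrite ffunDE ffunZE !ffunE ext_lind ext_lin scalerBr.
zsolve.
Qed.
Lemma dbr_alt (x : {ffun I -> F}) : dbr x x = 0.
Proof. by apply/ffunP => i; rewrite !ffunE subrr. Qed.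
Lemma djacobi (x y z : {ffun I -> F}) :
  dbr x (dbr y z) + dbr y (dbr z x) + dbr z (dbr x y) = 0.
Proof.
apply/ffunP => i; rewrite !ffunDE !ffunE !ext_dbr !extB.
zsolve.
Qed.

Definition DerLie : lieAlgebra K := LieAlgebra dbrDl dbrDr dbr_alt djacobi.

End Derivations.

Lemma eq0_sum1 (M : zmodType) (S A : M) : S = A -> A = 0 -> S = 0.
Proof. by move=> -> ->. Qed.

Lemma fbrE (K : fieldType) (I : Type) (x y : FL K I) : fbr x y = @lie_br K (FLie K I) x y.
Proof. by []. Qed.

Section Semidirect.
Variables (K : fieldType) (I : finType) (L2 : lieAlgebra K).
Local Notation F := (FLie K I).
Variable rho : L2 -> DerLie K I.
Hypothesis hrho : lie_hom rho.

Definition act (x : L2) (b : F) : F := ext (rho x) b.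

Lemma act_linx a x y b : act (a *: x + y) b = a *: act x b + act y b.
Proof. by rewrite /act hrho.1 ext_lind. Qed.
Lemma act_br x y b : act (lie_br x y) b = act x (act y b) - act y (act x b).
Proof. by rewrite /act hrho.2 /= ext_dbr. Qed.

Lemma br_ext_C d (u w : F) : lie_br (ext d u) w = - lie_br w (ext d u).
Proof. exact: brC. Qed.

Definition sdbr (p q : (F * L2)%type) : (F * L2)%type :=
  (lie_br p.1 q.1 + act p.2 q.1 - act q.2 p.1, lie_br p.2 q.2).

Lemma sdbrDl (a : K) (x y z : (F * L2)%type) : sdbr (a *: x + y) z = a *: sdbr x z + sdbr y z.
Proof.
case: x => x1 x2; case: y => y1 y2; case: z => z1 z2; rewrite /sdbr /= ?pairZ ?pairD ?fbrE.
congr (_, _); last by rewrite lie_brDl.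
rewrite lie_brDl act_linx /act ext_lin !scalerDr scalerN; zsolve.
Qed.
Lemma sdbrDr (a : K) (x y z : (F * L2)%type) : sdbr z (a *: x + y) = a *: sdbr z x + sdbr z y.
Proof.
case: x => x1 x2; case: y => y1 y2; case: z => z1 z2; rewrite /sdbr /= ?pairZ ?pairD ?fbrE.
congr (_, _); last by rewrite lie_brDr.
rewrite lie_brDr act_linx /act ext_lin !scalerDr scalerN; zsolve.
Qed.
Lemma sdbr_alt (x : (F * L2)%type) : sdbr x x = 0.
Proof.
case: x => x1 x2; rewrite /sdbr /= ?fbrE !lie_br_alt add0r subrr //.
Qed.
Lemma sdjacobi (x y z : (F * L2)%type) :
  sdbr x (sdbr y z) + sdbr y (sdbr z x) + sdbr z (sdbr x y) = 0.
Proof.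
case: x => a x; case: y => b y; case: z => c z; rewrite /sdbr /= ?pairD ?pair0 ?fbrE.
congr (_, _); last by rewrite lie_jacobi.
apply: (eq0_sum1 _ (lie_jacobi a b c)).
rewrite !act_br /act /= ?fbrE !extD ?extN !ext_der !brDr ?brNr !br_ext_C.
zsolve.
Qed.

Definition SD : lieAlgebra K := LieAlgebra sdbrDl sdbrDr sdbr_alt sdjacobi.
End Semidirect.

Section SubLie.
Variables (K : fieldType) (L : lieAlgebra K) (S : L -> Prop).
Hypotheses (S0 : S 0) (SL : forall a x y, S x -> S y -> S (a *: x + y))
  (SB : forall x y, S x -> S y -> S (lie_br x y)).

Record subL := SubL { sv : L; sprop : S sv }.

Lemma subL_eq (x y : subL) : sv x = sv y -> x = y.
Proof.
case: x => x hx; case: y => y hy /= exy; subst y.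
by rewrite (proof_irrelevance _ hx hy).
Qed.

HB.instance Definition _ := gen_eqMixin subL.
HB.instance Definition _ := gen_choiceMixin subL.

Lemma SN x : S x -> S (- x).
Proof. by move=> hx; have := SL (-1) hx S0; rewrite addr0 scaleN1r. Qed.
Lemma SA x y : S x -> S y -> S (x + y).
Proof. by move=> hx hy; have := SL 1 hx hy; rewrite scale1r. Qed.
Lemma SZ a x : S x -> S (a *: x).
Proof. by move=> hx; have := SL a hx S0; rewrite addr0. Qed.

Definition szero := SubL S0.
Definition sopp x := SubL (SN (sprop x)).
Definition sadd x y := SubL (SA (sprop x) (sprop y)).
Definition sscale a x := SubL (SZ a (sprop x)).
Definition ssbr x y := SubL (SB (sprop x) (sprop y)).

Lemma saddA : associative sadd.
Proof. by move=> x y z; apply: subL_eq; rewrite /= addrA. Qed.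
Lemma saddC : commutative sadd.
Proof. by move=> x y; apply: subL_eq; rewrite /= addrC. Qed.
Lemma sadd0 : left_id szero sadd.
Proof. by move=> x; apply: subL_eq; rewrite /= add0r. Qed.
Lemma saddN : left_inverse szero sopp sadd.
Proof. by move=> x; apply: subL_eq; rewrite /= addNr. Qed.
HB.instance Definition _ := GRing.isZmodule.Build subL saddA saddC sadd0 saddN.

Lemma sscaleA a b v : sscale a (sscale b v) = sscale (a * b) v.
Proof. by apply: subL_eq; rewrite /= scalerA. Qed.
Lemma sscale1 : left_id 1 sscale.
Proof. by move=> x; apply: subL_eq; rewrite /= scale1r. Qed.
Lemma sscaleDr : right_distributive sscale +%R.
Proof. by move=> a x y; apply: subL_eq; rewrite /= scalerDr. Qed.
Lemma sscaleDl v : {morph sscale^~ v: a b / a + b}.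
Proof. by move=> a b; apply: subL_eq; rewrite /= scalerDl. Qed.
HB.instance Definition _ := GRing.Zmodule_isLmodule.Build K subL sscaleA sscale1 sscaleDr sscaleDl.

Lemma svalD (x y : subL) : sv (x + y) = sv x + sv y. Proof. by []. Qed.
Lemma svalZ a (x : subL) : sv (a *: x) = a *: sv x. Proof. by []. Qed.
Lemma sval0 : sv (0 : subL) = 0. Proof. by []. Qed.

Lemma ssbrDl (a : K) (x y z : subL) : ssbr (a *: x + y) z = a *: ssbr x z + ssbr y z.
Proof. by apply: subL_eq; rewrite /= lie_brDl. Qed.
Lemma ssbrDr (a : K) (x y z : subL) : ssbr z (a *: x + y) = a *: ssbr z x + ssbr z y.
Proof. by apply: subL_eq; rewrite /= lie_brDr. Qed.
Lemma ssbr_alt (x : subL) : ssbr x x = 0.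
Proof. by apply: subL_eq; rewrite /= lie_br_alt. Qed.
Lemma ssjacobi (x y z : subL) : ssbr x (ssbr y z) + ssbr y (ssbr z x) + ssbr z (ssbr x y) = 0.
Proof. by apply: subL_eq; rewrite /= lie_jacobi. Qed.

Definition SubLie : lieAlgebra K := LieAlgebra ssbrDl ssbrDr ssbr_alt ssjacobi.

Lemma sval_hom : lie_hom (sv : SubLie -> L).
Proof. by split. Qed.
End SubLie.

Section Comb.
Variables (T : finType) (E : {set {set T}}) (v : T).
Hypothesis hE : forall e, e \in E -> #|e| = 2%N.
Hypothesis hK : link_complete E v.

Local Notation Vs := (incident E v).
Local Notation E2 := (E :\: incident E v).
Local Notation N := (neighbours E v).

Lemma inVsE i : (i \in Vs) = (i \in E) && (v \in i).
Proof. by rewrite inE. Qed.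
Lemma inNE w : (w \in N) = ([set v; w] \in E).
Proof. by rewrite inE. Qed.
Lemma inE2E e : (e \in E2) = (e \in E) && (v \notin e).
Proof. by rewrite !inE andbC; case: (e \in E); rewrite //= andbT. Qed.

Lemma two_set e : e \in E -> exists p q, p != q /\ e = [set p; q].
Proof. by move/hE/eqP/cards2P. Qed.

Lemma vNN : v \notin N.
Proof.
apply/negP; rewrite inNE setUid => /hE.
by rewrite cards1.
Qed.

Lemma inN_neq w : w \in N -> w != v.
Proof. by apply: contraTneq => ->; exact: vNN. Qed.

Lemma inVs_ex i : i \in Vs -> exists w, w \in N /\ i = [set v; w].
Proof.
rewrite inVsE => /andP [iE vi]; have [p [q [pq ei]]] := two_set iE.
move: iE vi; rewrite ei !inE => iE /orP [] /eqP vE.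
  by exists q; rewrite inNE vE.
by exists p; rewrite inNE vE setUC.
Qed.

Lemma set2_in_Vs w : w \in N -> [set v; w] \in Vs.
Proof. by move=> wN; rewrite inVsE -inNE wN !inE eqxx. Qed.

Lemma set2C (p q : T) : [set p; q] = [set q; p].
Proof. exact: setUC. Qed.

Lemma tri_rot a b c : is_triangle E a b c -> is_triangle E b c a.
Proof.
case=> p [q [r [/and3P [pq qr rp] [ea [eb [ec [aE [bE cE]]]]]]]].
exists q, r, p; split; first by rewrite qr rp pq.
by do !split.
Qed.

Lemma tri_swap a b c : is_triangle E a b c -> is_triangle E b a c.
Proof.
case=> p [q [r [/and3P [pq qr rp] [ea [eb [ec [aE [bE cE]]]]]]]].
exists r, q, p; split; first by rewrite [r == q]eq_sym qr [q == p]eq_sym pq [p == r]eq_sym rp.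
by do !split => //; rewrite ?ea ?eb ?ec setUC.
Qed.

Lemma tri_sub (E' : {set {set T}}) a b c : E' \subset E -> is_triangle E' a b c -> is_triangle E a b c.
Proof.
move=> sub; case=> p [q [r [d [ea [eb [ec [aE [bE cE]]]]]]]].
exists p, q, r; split => //; do !split => //; exact: (subsetP sub).
Qed.

End Comb.

Section Main.
Variables (K : fieldType) (T : finType) (E : {set {set T}}) (v : T).
Hypothesis hE : forall e, e \in E -> #|e| = 2%N.
Hypothesis hK : link_complete E v.

Local Notation Vs := (incident E v).
Local Notation E2 := (E :\: incident E v).
Local Notation N := (neighbours E v).
Local Notation F := (FLie K T).
Local Notation Y := (@X K T).

Definition sig (e : {set T}) : F := \sum_(u in e :&: N) Y u.
Definition dval (e : {set T}) : {ffun T -> F} :=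
  [ffun w => if w \in e :&: N then lie_br (Y w) (sig e) else 0].

Lemma set2_eq_in (p q w : T) : (w \in [set p; q]) = (w == p) || (w == q).
Proof. by rewrite !inE. Qed.

Lemma sig_pq p q : p != q -> p \in N -> q \in N -> sig [set p; q] = Y p + Y q.
Proof.
move=> pq pN qN; rewrite /sig.
have -> : [set p; q] :&: N = [set p; q].
  by apply/setIidPl; rewrite subUset !sub1set pN qN.
by rewrite big_setU1 ?big_set1 //= inE.
Qed.

Lemma sig_p p q : p \in N -> q \notin N -> sig [set p; q] = Y p.
Proof.
move=> pN qN; rewrite /sig.
have -> : [set p; q] :&: N = [set p].
  apply/setP => x; rewrite in_setI in_set2 in_set1; case: (x =P p) => [->|_]; rewrite /= ?pN //.
  by case: (x =P q) => [->|] //=; rewrite (negbTE qN).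
by rewrite big_set1.
Qed.

Lemma sig_Vs w : w \in N -> sig [set v; w] = Y w.
Proof. by move=> wN; rewrite setUC sig_p // vNN. Qed.

Lemma D_pq p q : p != q -> p \in N -> q \in N -> dval [set p; q] p = lie_br (Y p) (Y q).
Proof.
move=> pq pN qN; rewrite ffunE in_setI in_set2 eqxx pN /= ?fbrE sig_pq // brDr lie_br_alt add0r //.
Qed.

Lemma D_out e w : w \notin e :&: N -> dval e w = 0.
Proof. by move=> h; rewrite ffunE (negbTE h). Qed.

Lemma D_zero e : e \in E -> ~~ (e \subset N) -> dval e = 0.
Proof.
move=> eE; have [p [q [pq ->]]] := two_set hE eE => nsub.
apply/ffunP => w; rewrite ffun0E ffunE; case: ifP => // /setIP [wpq wN].
have [pN|pN] := boolP (p \in N); have [qN|qN] := boolP (q \in N).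
- by move: nsub; rewrite subUset !sub1set pN qN.
- by move: wpq; rewrite !inE => /orP [] /eqP wE; subst w;
    [rewrite sig_p // lie_br_alt | move: wN; rewrite (negbTE qN)].
- move: wpq; rewrite !inE => /orP [] /eqP wE; subst w.
    by move: wN; rewrite (negbTE pN).
  by rewrite setUC sig_p // lie_br_alt.
- by move: wpq; rewrite !inE => /orP [] /eqP wE; subst w; rewrite ?(negbTE pN) ?(negbTE qN) in wN.
Qed.


Lemma ext_sig d e : ext d (sig e) = \sum_(u in e :&: N) d u.
Proof.
rewrite /sig (big_morph (ext d) (extD d) (ext0 d)).
by apply: eq_bigr => u _; rewrite ext_X.
Qed.

Lemma ext_D_disj (a b : {set T}) (w : T) : (forall x, x \in b -> x \in N -> x \notin a) ->
  ext (dval a) (dval b w) = 0.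
Proof.
move=> dis; rewrite ffunE; case: ifP => [/setIP [wb wN]|_]; last exact: ext0.
rewrite ext_der ext_sig ext_X big1 ?br0r ?D_out ?br0l ?addr0 //.
  by rewrite in_setI negb_and dis.
by move=> u /setIP [ub uN]; rewrite D_out // in_setI negb_and dis.
Qed.

Lemma other_vertex (e : {set T}) (x : T) : e \in E -> x \in e -> exists y, y != x /\ e = [set x; y].
Proof.
move=> eE; have [p [q [pq ->]]] := two_set hE eE; rewrite !inE => /orP [] /eqP ->.
  by exists q; rewrite eq_sym.
by exists p; rewrite setUC.
Qed.

Lemma E2_notv (e : {set T}) : e \in E2 -> v \notin e.
Proof. by rewrite inE2E => /andP []. Qed.
Lemma E2_E (e : {set T}) : e \in E2 -> e \in E.
Proof. by rewrite inE2E => /andP []. Qed.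

Lemma link_E w1 w2 : w1 \in N -> w2 \in N -> w1 != w2 -> [set w1; w2] \in E.
Proof. by move=> h1 h2 h12; have := hK h1 h2 h12; rewrite inE => /andP []. Qed.

Lemma notv_E2 (e : {set T}) : e \in E -> v \notin e -> e \in E2.
Proof. by move=> eE ve; rewrite inE2E eE ve. Qed.

Lemma v_notin2 p q : p \in N -> q \in N -> v \notin [set p; q].
Proof.
move=> pN qN; rewrite !inE negb_or; apply/andP; split; rewrite eq_sym; [exact: inN_neq pN | exact: inN_neq qN].
Qed.

Lemma R1i (a b : {set T}) : a \in E2 -> b \in E2 -> a != b -> ~ (exists c, is_triangle E2 a b c) ->
  dbr (dval a) (dval b) = 0.
Proof.
move=> aE2 bE2 ab ntri.
have [aN|aN] := boolP (a \subset N); last first.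
  by rewrite (D_zero (E2_E aE2) aN); exact: (br0l (L := DerLie K T)).
have [bN|bN] := boolP (b \subset N); last first.
  by rewrite (D_zero (E2_E bE2) bN); exact: (br0r (L := DerLie K T)).
have dis : forall x, x \in a -> x \notin b.
  move=> x xa; apply/negP => xb; apply: ntri.
  have [y [yx ea]] := other_vertex (E2_E aE2) xa.
  have [z [zx eb]] := other_vertex (E2_E bE2) xb.
  have yN : y \in N by apply: (subsetP aN); rewrite ea !inE eqxx orbT.
  have zN : z \in N by apply: (subsetP bN); rewrite eb !inE eqxx orbT.
  have yz : y != z by apply: contraNneq ab => yz; rewrite ea eb yz.
  exists [set z; y], y, x, z; split; first by rewrite yx eq_sym zx eq_sym yz.
  do !split => //; first by rewrite ea setUC.
  - apply: notv_E2; first by apply: link_E => //; rewrite eq_sym.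
    exact: v_notin2.
apply/ffunP => w; rewrite ffunE ffun0E.
rewrite !ext_D_disj ?subrr //;
  first [by move=> x xa _; exact: dis xa | by move=> x xb _; apply/negP => xa; move: (dis x xa); rewrite xb].
Qed.


Lemma dbrE (d1 d2 : {ffun T -> F}) w : dbr d1 d2 w = ext d1 (d2 w) - ext d2 (d1 w).
Proof. by rewrite ffunE. Qed.

Lemma eq0_opp1 (M : zmodType) (S A : M) : S = - A -> A = 0 -> S = 0.
Proof. by move=> -> ->; rewrite oppr0. Qed.

Lemma D_not (e : {set T}) w : w \notin e -> dval e w = 0.
Proof. by move=> h; rewrite D_out // in_setI negb_and h. Qed.

Lemma L3 p q r : p != q -> q != r -> r != p -> p \in N -> q \in N -> r \in N ->
  dbr (dval [set p; q]) (dval [set q; r]) p = dbr (dval [set q; r]) (dval [set r; p]) p /\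
  dbr (dval [set q; r]) (dval [set r; p]) p = dbr (dval [set r; p]) (dval [set p; q]) p.
Proof.
move=> pq qr rp pN qN rN.
have Dap : dval [set p; q] p = lie_br (Y p) (Y q) by rewrite D_pq.
have Dbq : dval [set q; r] q = lie_br (Y q) (Y r) by rewrite D_pq.
have Dbr : dval [set q; r] r = lie_br (Y r) (Y q) by rewrite setUC D_pq // eq_sym.
have Dcp : dval [set r; p] p = lie_br (Y p) (Y r) by rewrite setUC D_pq // eq_sym.
have Dbp : dval [set q; r] p = 0 by rewrite D_not // !inE; apply/norP; split; rewrite // eq_sym.
have Dar : dval [set p; q] r = 0 by rewrite D_not // !inE; apply/norP; split; rewrite // eq_sym.
have Dcq : dval [set r; p] q = 0 by rewrite D_not // !inE; apply/norP; split; rewrite // eq_sym.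
rewrite !dbrE Dap Dbp Dcp !ext0 !ext_der !ext_X Dbq Dbr Dar Dcq Dap Dbp Dcp ?br0l ?br0r; split.
  rewrite [lie_br (Y r) (Y q)]brC brNr; zsolve.
apply: zmod_eq_sub; apply: (eq0_opp1 _ (lie_jacobi (Y p) (Y q) (Y r))).
rewrite [lie_br (lie_br (Y p) (Y r)) (Y q)]brC [lie_br (lie_br (Y p) (Y q)) (Y r)]brC.
rewrite [lie_br (Y p) (Y r)]brC [lie_br (Y r) (Y q)]brC !brNr.
zsolve.
Qed.


Lemma dbr0l (d : {ffun T -> F}) : dbr 0 d = 0.
Proof. exact: (br0l (L := DerLie K T) d). Qed.
Lemma dbr0r (d : {ffun T -> F}) : dbr d 0 = 0.
Proof. exact: (br0r (L := DerLie K T) d). Qed.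

Lemma R1ii (a b c : {set T}) : is_triangle E2 a b c ->
  dbr (dval a) (dval b) = dbr (dval b) (dval c) /\
  dbr (dval b) (dval c) = dbr (dval c) (dval a).
Proof.
case=> p [q [r [/and3P [pq qr rp] [-> [-> [-> [aE [bE cE]]]]]]]].
have zero2 (x y : {set T}) (d : {ffun T -> F}) : x \in E2 -> ~~ (x \subset N) ->
    y \in E2 -> ~~ (y \subset N) ->
    dbr (dval x) d = dbr d (dval y) /\ dbr d (dval y) = dbr (dval y) (dval x).
  move=> xE xN yE yN; rewrite (D_zero (E2_E xE) xN) (D_zero (E2_E yE) yN).
  by rewrite dbr0l dbr0r dbr0l.
have [pN|pN] := boolP (p \in N); last first.
  by apply: zero2 => //; rewrite subUset !sub1set (negbTE pN) ?andbF.
have [qN|qN] := boolP (q \in N); last first.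
  have bN' : ~~ ([set q; r] \subset N) by rewrite subUset !sub1set (negbTE qN).
  have aN' : ~~ ([set p; q] \subset N) by rewrite subUset !sub1set (negbTE qN) andbF.
  have [h1 h2] := zero2 _ _ (dval [set r; p]) bE bN' aE aN'.
  by split; [rewrite h1 h2 | exact: h1].
have [rN|rN] := boolP (r \in N); last first.
  have cN' : ~~ ([set r; p] \subset N) by rewrite subUset !sub1set (negbTE rN).
  have bN' : ~~ ([set q; r] \subset N) by rewrite subUset !sub1set (negbTE rN) andbF.
  have [h1 h2] := zero2 _ _ (dval [set p; q]) cE cN' bE bN'.
  by split; [exact: h2 | rewrite -h2 h1].
have gen w : w != p -> w != q -> w != r -> forall x y : {set T},
    x \in [:: [set p; q]; [set q; r]; [set r; p]] -> y \in [:: [set p; q]; [set q; r]; [set r; p]] ->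
    dbr (dval x) (dval y) w = 0.
  move=> wp wq wr x y hx hy.
  have notin z : z \in [:: [set p; q]; [set q; r]; [set r; p]] -> w \notin z.
    by rewrite !inE => /or3P [] /eqP ->; rewrite !inE negb_or ?wp ?wq ?wr.
  by rewrite dbrE !D_not ?ext0 ?subrr //; apply: notin.
have pt w : dbr (dval [set p; q]) (dval [set q; r]) w = dbr (dval [set q; r]) (dval [set r; p]) w /\
  dbr (dval [set q; r]) (dval [set r; p]) w = dbr (dval [set r; p]) (dval [set p; q]) w.
  case: (w =P p) => [->|wp]; first exact: L3.
  case: (w =P q) => [->|wq].
    have [h1 h2] := L3 qr rp pq qN rN pN; by split; rewrite ?h1 ?h2.
  case: (w =P r) => [->|wr].
    have [h1 h2] := L3 rp pq qr rN pN qN; by split; rewrite -?h1 -?h2 // h1.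
  have wp' : w != p by apply/eqP. have wq' : w != q by apply/eqP. have wr' : w != r by apply/eqP.
  by rewrite !(gen w wp' wq' wr') // !inE eqxx ?orbT.
by split; apply/ffunP => w; have [h1 h2] := pt w.
Qed.


Lemma R1 : holonomy_rel E2 (dval : {set T} -> DerLie K T).
Proof.
split; first by move=> a b aE bE ab nt; exact: R1i.
by move=> a b c; exact: R1ii.
Qed.

Lemma tri_Vs e w c : e \in E2 -> is_triangle E e [set v; w] c ->
  [/\ w \in e, e \subset N & w \in N].
Proof.
move=> eE2; case=> p [q [r [/and3P [pq qr rp] [ea [eb [ec [aE [bE cE]]]]]]]].
have ve := E2_notv eE2.
have wN : w \in N by rewrite inNE.
have qe : q \in e by rewrite ea !inE eqxx orbT.
have qw : q = w.
  have : q \in [set v; w] by rewrite eb !inE eqxx.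
  rewrite !inE => /orP [] /eqP // qv; by move: ve; rewrite -qv qe.
have rv : r = v.
  have : r \in [set v; w] by rewrite eb !inE eqxx orbT.
  rewrite !inE => /orP [] /eqP // rw; by move: qr; rewrite qw rw eqxx.
have pN : p \in N by rewrite inNE -rv -ec.
split; first by rewrite -qw.
  by rewrite ea subUset !sub1set pN qw wN.
exact: wN.
Qed.

Variables (LG LG2 : lieAlgebra K) (iota : {set T} -> LG) (iota2 : {set T} -> LG2).
Hypothesis hLG1 : holonomy_rel E iota.

Lemma R2 : holonomy_rel E2 iota.
Proof.
split.
  move=> a b aE2 bE2 ab nt; apply: hLG1.1 => //; try exact: E2_E.
  case=> c; case=> p [q [r [d [ea [eb [ec [aE [bE cE]]]]]]]].
  have [cE2|cE2] := boolP (c \in E2).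
    by apply: nt; exists c, p, q, r.
  have vc : v \in c by move: cE2; rewrite inE2E cE /= negbK.
  move: vc; rewrite ec !inE => /orP [] /eqP vE.
    by move: (E2_notv bE2); rewrite eb vE !inE eqxx orbT.
  by move: (E2_notv aE2); rewrite ea vE !inE eqxx.
move=> a b c tri; apply: hLG1.2; apply: (tri_sub _ tri).
by apply/subsetP => x; rewrite inE => /andP [].
Qed.

Definition jf (w : T) : LG := if w \in N then iota [set v; w] else 0.
Definition j : F -> LG := feval jf.

Lemma j_hom : lie_hom j. Proof. exact: feval_hom. Qed.
Lemma j0 : j 0 = 0. Proof. exact: (lin0 j_hom.1). Qed.
Lemma jY w : j (Y w) = jf w. Proof. exact: feval_X. Qed.

Lemma R4 e w : e \in E2 -> j (dval e w) = lie_br (iota e) (j (Y w)).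
Proof.
move=> eE2; rewrite jY /jf; have ve := E2_notv eE2; have eE := E2_E eE2.
have [wN|wN] := boolP (w \in N); last first.
  by rewrite D_out ?j0 ?br0r // in_setI negb_and wN orbT.
have vwE : [set v; w] \in E by rewrite -inNE.
have nev : e != [set v; w].
  by apply: contraNneq ve => ->; rewrite !inE eqxx.
have [we|we] := boolP (w \in e); last first.
  rewrite D_not // j0; symmetry; apply: hLG1.1 => // -[c /tri_Vs] [] //.
  by move=> wi; rewrite wi in we.
have [u [uw eu]] := other_vertex eE we.
have [uN|uN] := boolP (u \in N); last first.
  rewrite ffunE in_setI we wN /= ?fbrE [in sig e]eu sig_p // lie_br_alt j0.
  symmetry; apply: hLG1.1 => //.
  move=> -[c /tri_Vs] [] // _.
  by rewrite eu subUset !sub1set (negbTE uN) andbF.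
rewrite eu D_pq // ?(eq_sym w) // (j_hom.2) !jY /jf wN uN.
have tri : is_triangle E [set v; w] [set w; u] [set u; v].
  exists v, w, u; split; first by rewrite eq_sym (inN_neq hE wN) eq_sym uw (inN_neq hE uN).
  by do !split => //; rewrite -?eu // setUC -inNE.
have [h1 h2] := hLG1.2 _ _ _ tri.
by rewrite [RHS]brC h1 h2 -brC (setUC [set u]).
Qed.


Lemma ext_zero (x : F) : ext (0 : {ffun T -> F}) x = 0.
Proof.
have := ext_lind 1 (0 : {ffun T -> F}) 0 x; rewrite scaler0 addr0 scale1r => H.
by apply: (addrI (ext 0 x)); rewrite addr0 -H.
Qed.

Lemma key e : e \in E2 -> forall b, j (ext (dval e) b) = lie_br (iota e) (j b).
Proof.
move=> eE2; elim/F_ind.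
- by rewrite ext0 j0 br0r.
- by move=> a x y ex ey; rewrite ext_lin !j_hom.1 ex ey lie_brDr.
- move=> x y ex ey; rewrite ext_der (linD j_hom.1) !j_hom.2 ex ey.
  apply: zmod_eq_sub; apply: (eq0_opp1 _ (lie_jacobi (iota e) (j x) (j y))).
  rewrite [lie_br (iota e) (j y)]brC [lie_br (lie_br (iota e) (j x)) (j y)]brC !brNr.
  zsolve.
- by move=> i; rewrite ext_X; apply: R4.
Qed.

Variables (rho : LG2 -> DerLie K T) (hrho : lie_hom rho).
Hypothesis hrhoE : forall e, e \in E2 -> rho (iota2 e) = dval e.
Variables (s : LG2 -> LG) (hs : lie_hom s).
Hypothesis hsE : forall e, e \in E2 -> s (iota2 e) = iota e.

Local Notation P := (SD hrho).

Lemma act0 x : act rho 0 x = 0.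
Proof. by rewrite /act (lin0 hrho.1) ext_zero. Qed.
Lemma act_x0 y : act rho y 0 = 0.
Proof. by rewrite /act ext0. Qed.

Definition Qp (p : P) : Prop := forall b, j (act rho p.2 b) = lie_br (s p.2) (j b).

Lemma Qp_snd0 (p : P) : p.2 = 0 -> Qp p.
Proof. by move=> h b; rewrite h act0 j0 (lin0 hs.1) br0l. Qed.

Lemma Q0 : Qp 0.
Proof. exact: Qp_snd0. Qed.

Lemma QL a (x y : P) : Qp x -> Qp y -> Qp (a *: x + y).
Proof.
move=> hx hy b; case: x hx => x1 x2 hx; case: y hy => y1 y2 hy /=.
have {}hx : forall c, j (act rho x2 c) = lie_br (s x2) (j c) := hx.
have {}hy : forall c, j (act rho y2 c) = lie_br (s y2) (j c) := hy.
by rewrite (act_linx hrho) j_hom.1 hx hy hs.1 lie_brDl.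
Qed.

Lemma QB (x y : P) : Qp x -> Qp y -> Qp (lie_br x y).
Proof.
move=> hx hy b; case: x hx => x1 x2 hx; case: y hy => y1 y2 hy /=.
have {}hx : forall c, j (act rho x2 c) = lie_br (s x2) (j c) := hx.
have {}hy : forall c, j (act rho y2 c) = lie_br (s y2) (j c) := hy.
rewrite (act_br hrho) (linB j_hom.1) !hx !hy ?hx ?hy hs.2.
apply: zmod_eq_sub; apply: (eq0_sum1 _ (lie_jacobi (s x2) (s y2) (j b))).
rewrite [lie_br (s x2) (j b)]brC [lie_br (lie_br (s x2) (s y2)) (j b)]brC !brNr.
zsolve.
Qed.

Definition QLie : lieAlgebra K := SubLie Q0 QL QB.

Definition psi (q : QLie) : LG := j (sv q).1 + s (sv q).2.

Lemma psi_hom : lie_hom psi.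
Proof.
split.
  move=> a [[x1 x2] hx] [[y1 y2] hy]; rewrite /psi /=.
  rewrite j_hom.1 hs.1 scalerDr; zsolve.
move=> [[x1 x2] hx] [[y1 y2] hy]; rewrite /psi /=.
have {}hx : forall c, j (act rho x2 c) = lie_br (s x2) (j c) := hx.
have {}hy : forall c, j (act rho y2 c) = lie_br (s y2) (j c) := hy.
rewrite /= ?fbrE !(linD j_hom.1) (linN j_hom.1) hx hy hs.2 j_hom.2 !brDl !brDr.
rewrite [lie_br (s y2) (j x1)]brC; zsolve.
Qed.


Hypothesis hLG2r : holonomy_rel E2 iota2.

Lemma Qp_a (a : F) : Qp ((a, 0) : P).
Proof. exact: Qp_snd0. Qed.

Lemma Qp_gen e : Qp ((0, if e \in E2 then iota2 e else 0) : P).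
Proof.
case: ifP => eE2; last exact: Qp_snd0.
by move=> b; rewrite /= /act hrhoE // key // hsE.
Qed.

Definition fq (e : {set T}) : QLie :=
  if e \in Vs then SubL (Qp_a (sig e)) else SubL (Qp_gen e).

Lemma E2_notVs e : e \in E2 -> e \notin Vs.
Proof. by rewrite inE => /andP []. Qed.

Lemma sv_fq_Vs e : e \in Vs -> sv (fq e) = (sig e, 0).
Proof. by move=> h; rewrite /fq h. Qed.
Lemma sv_fq_E2 e : e \in E2 -> sv (fq e) = (0, iota2 e).
Proof. by move=> h; rewrite /fq (negbTE (E2_notVs h)) /= h. Qed.

Lemma svbr (x y : QLie) : sv (lie_br x y) = sdbr rho (sv x) (sv y).
Proof. by []. Qed.

Lemma sdbrE (a b : F) (x y : LG2) :
  sdbr rho (a, x) (b, y) = (lie_br a b + act rho x b - act rho y a, lie_br x y).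
Proof. by []. Qed.

Lemma act_gen e w : e \in E2 -> act rho (iota2 e) (Y w) = dval e w.
Proof. by move=> h; rewrite /act hrhoE // ext_X. Qed.

Lemma tri_vw (w u : T) : w \in N -> u \in N -> w != u ->
  is_triangle E [set v; w] [set w; u] [set u; v].
Proof.
move=> wN uN wu; exists v, w, u; split.
  by rewrite eq_sym (inN_neq hE wN) wu (inN_neq hE uN).
by do !split => //; first [by rewrite -inNE | by apply: link_E | by rewrite setUC -inNE].
Qed.

Lemma R3VE a b : a \in Vs -> b \in E2 -> ~ (exists c, is_triangle E a b c) ->
  lie_br (fq a) (fq b) = 0.
Proof.
move=> aV bE2 nt; apply: subL_eq.
rewrite svbr sv_fq_Vs // sv_fq_E2 // sdbrE.
have [w [wN ea]] := inVs_ex hE aV; subst a.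
rewrite sig_Vs // act_gen // act0 !br0r br0l.
suff -> : dval b w = 0 by rewrite oppr0 !addr0.
have [bN|bN] := boolP (b \subset N); last by rewrite D_zero ?ffun0E // E2_E.
have [wb|wb] := boolP (w \in b); last exact: D_not.
have [u [uw eb]] := other_vertex (E2_E bE2) wb.
have uN : u \in N by apply: (subsetP bN); rewrite eb !inE eqxx orbT.
case: nt; exists [set u; v]; rewrite eb; apply: tri_vw => //; by rewrite eq_sym.
Qed.

Lemma R3i a b : a \in E -> b \in E -> a != b -> ~ (exists c, is_triangle E a b c) ->
  lie_br (fq a) (fq b) = 0.
Proof.
move=> aE bE ab nt.
have [aV|aV] := boolP (a \in Vs); have [bV|bV] := boolP (b \in Vs).
- have [w1 [w1N ea]] := inVs_ex hE aV; have [w2 [w2N eb]] := inVs_ex hE bV.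
  have w12 : w1 != w2 by apply: contraNneq ab => e12; rewrite ea eb e12.
  case: nt; exists [set w2; w1], w1, v, w2; split.
    by rewrite (inN_neq hE w1N) eq_sym (inN_neq hE w2N) eq_sym w12.
  by do !split => //; first [by rewrite ea setUC | by rewrite eb | by apply: link_E; rewrite // eq_sym].
- by apply: R3VE => //; apply: notv_E2 => //; move: bV; rewrite inVsE bE.
- have aE2 : a \in E2 by apply: notv_E2 => //; move: aV; rewrite inVsE aE.
  rewrite brC (R3VE bV aE2) ?oppr0 // => -[c /tri_swap tri]; apply: nt; by exists c.
- have aE2 : a \in E2 by apply: notv_E2 => //; move: aV; rewrite inVsE aE.
  have bE2 : b \in E2 by apply: notv_E2 => //; move: bV; rewrite inVsE bE.
  apply: subL_eq; rewrite svbr !sv_fq_E2 // sdbrE !act_x0 br0l oppr0 !addr0.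
  rewrite hLG2r.1 //; move=> [c tri]; apply: nt; exists c; apply: (tri_sub _ tri).
  by apply/subsetP => x; rewrite inE => /andP [].
Qed.


Definition Rel (a b c : {set T}) :=
  lie_br (fq a) (fq b) = lie_br (fq b) (fq c) /\ lie_br (fq b) (fq c) = lie_br (fq c) (fq a).

Lemma Rel_rot a b c : Rel b c a -> Rel a b c.
Proof. by case=> h1 h2; split; rewrite ?h1 ?h2. Qed.

Lemma pair_eq (A B : Type) (x x' : A) (y y' : B) : x = x' -> y = y' -> (x, y) = (x', y').
Proof. by move=> -> ->. Qed.

Lemma R3p q r : q \in N -> r \in N -> q != r -> Rel [set v; q] [set q; r] [set r; v].
Proof.
move=> qN rN qr.
have bE2 : [set q; r] \in E2 by apply: notv_E2; [exact: link_E | exact: v_notin2].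
have aV : [set v; q] \in Vs by exact: set2_in_Vs.
have cV : [set r; v] \in Vs by rewrite setUC; exact: set2_in_Vs.
have Dq : dval [set q; r] q = lie_br (Y q) (Y r) by rewrite D_pq.
have Dr : dval [set q; r] r = lie_br (Y r) (Y q) by rewrite setUC D_pq // eq_sym.
have sa : sv (fq [set v; q]) = (Y q, 0) by rewrite sv_fq_Vs // sig_Vs.
have sb : sv (fq [set q; r]) = (0, iota2 [set q; r]) by rewrite sv_fq_E2.
have sc : sv (fq [set r; v]) = (Y r, 0) by rewrite sv_fq_Vs // setUC sig_Vs.
split; apply: subL_eq; rewrite !svbr sa sb sc !sdbrE ?act_gen // ?Dq ?Dr ?act0 ?act_x0 ?br0l ?br0r;
  apply: pair_eq => //; rewrite ?[lie_br (Y q) (Y r)]brC; zsolve.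
Qed.

Lemma R3ii a b c : is_triangle E a b c -> Rel a b c.
Proof.
move=> tri; have tri' := tri.
case: tri' => p [q [r [/and3P [pq qr rp] [ea [eb [ec [aE [bE cE]]]]]]]].
case: (v =P p) => [vp|vp].
  rewrite ea eb ec -vp in aE cE *.
  by apply: R3p => //; [rewrite inNE | rewrite inNE setUC].
case: (v =P q) => [vq|vq].
  rewrite ea eb ec -vq in aE bE *.
  by apply: Rel_rot; apply: R3p => //; [rewrite inNE | rewrite inNE setUC].
case: (v =P r) => [vr|vr].
  rewrite ea eb ec -vr in bE cE *.
  by do 2 apply: Rel_rot; apply: R3p => //; [rewrite inNE | rewrite inNE setUC].
have nv (x y : T) : v != x -> v != y -> v \notin [set x; y].
  by move=> h1 h2; rewrite !inE negb_or h1 h2.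
have aE2 : a \in E2 by apply: notv_E2 => //; rewrite ea nv //; apply/eqP.
have bE2 : b \in E2 by apply: notv_E2 => //; rewrite eb nv //; apply/eqP.
have cE2 : c \in E2 by apply: notv_E2 => //; rewrite ec nv //; apply/eqP.
have tri2 : is_triangle E2 a b c by exists p, q, r; rewrite pq qr rp.
have [h1 h2] := hLG2r.2 _ _ _ tri2.
split; apply: subL_eq; rewrite !svbr !sv_fq_E2 // !sdbrE !act_x0 !br0l oppr0 !addr0;
  by rewrite ?h1 ?h2.
Qed.

Lemma R3 : holonomy_rel E fq.
Proof.
split; first by move=> a b aE bE ab nt; exact: R3i.
by move=> a b c tri; exact: R3ii.
Qed.

End Main.

Lemma hom_rel (K : fieldType) (T : finType) (E : {set {set T}}) (L M : lieAlgebra K)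
  (x : {set T} -> L) (h : L -> M) :
  lie_hom h -> holonomy_rel E x -> holonomy_rel E (fun e => h (x e)).
Proof.
move=> [hl hb] [r1 r2]; split.
  by move=> a b aE bE ab nt; rewrite -hb r1 // (lin0 hl).
by move=> a b c t; have [e1 e2] := r2 a b c t; rewrite -!hb e1 e2.
Qed.

Lemma hom_on0 (K : fieldType) (L M : lieAlgebra K) (S : L -> Prop) (h : L -> M) :
  S 0 -> lie_hom_on S h -> h 0 = 0.
Proof.
move=> S0 hh; have := (hh 1 0 0 S0 S0).1; rewrite !scale1r addr0 => H.
by apply: (addrI (h 0)); rewrite addr0 -H.
Qed.

Theorem mainTheorem4 (K : fieldType) (T : finType) (E : {set {set T}})
    (hE : forall e, e \in E -> #|e| = 2%N) (v : T)
    (LG LG2 : lieAlgebra K) (iota : {set T} -> LG) (iota2 : {set T} -> LG2)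
    (hLG : is_holonomy E iota)
    (hLG2 : is_holonomy (E :\: incident E v) iota2)
    (pi : LG -> LG2) (hpi : lie_hom pi)
    (hpiV : forall e, e \in incident E v -> pi (iota e) = 0)
    (hpiE : forall e, e \in E :\: incident E v -> pi (iota e) = iota2 e)
    (hK : link_complete E v) :
  free_on (fun x : LG => pi x = 0) (incident E v) iota.
Proof.
have hLG1 := hLG.1.
have [rho [hrho hrhoE _]] := hLG2.2 (DerLie K T) (dval K E v) (R1 K hE hK).
have [s [hs hsE _]] := hLG2.2 LG iota (R2 v hLG1).
have hLG2r := hLG2.1.
pose fQ := fq hE hLG1 hrho hrhoE hs hsE.
have [phi [hphi hphiE _]] := hLG.2 _ fQ (R3 hE hK hLG1 hrho hrhoE hs hsE hLG2r).
have [h0 [_ _ u0]] := hLG.2 LG iota hLG1.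
have psiphi : forall y, psi (phi y) = y.
  have c1 : lie_hom (fun y => psi (phi y)).
    split; first by move=> a x z; rewrite hphi.1 (psi_hom E v iota hrho hs).1.
    by move=> x z; rewrite hphi.2 (psi_hom E v iota hrho hs).2.
  have c2 : forall e, e \in E -> psi (phi (iota e)) = iota e.
    move=> e eE; rewrite hphiE // /psi.
    have [eV|eV] := boolP (e \in incident E v).
      rewrite sv_fq_Vs //=; have [w [wN ew]] := inVs_ex hE eV.
      by rewrite ew sig_Vs // jY /jf wN (lin0 hs.1) addr0.
    have eE2 : e \in E :\: incident E v by rewrite inE eV eE.
    by rewrite sv_fq_E2 //= (lin0 (j_hom E v iota).1) add0r hsE.
  move=> y; rewrite (u0 _ c1 c2 y); symmetry; apply: (u0 id) => //; by split.
have [h1 [_ _ u1]] := hLG.2 LG2 (fun e => pi (iota e)) (hom_rel hpi hLG1).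
have piphi : forall y, (sv (phi y)).2 = pi y.
  have c1 : lie_hom (fun y => (sv (phi y)).2).
    split; first by move=> a x z; rewrite hphi.1.
    by move=> x z; rewrite hphi.2.
  have c2 : forall e, e \in E -> (sv (phi (iota e))).2 = pi (iota e).
    move=> e eE; rewrite hphiE //.
    have [eV|eV] := boolP (e \in incident E v).
      by rewrite sv_fq_Vs //= hpiV.
    have eE2 : e \in E :\: incident E v by rewrite inE eV eE.
    by rewrite sv_fq_E2 //= hpiE.
  move=> y; rewrite (u1 _ c1 c2 y); symmetry; exact: (u1 pi).
split.
- exact: (lin0 hpi.1).
- by move=> a x y hx hy; rewrite hpi.1 hx hy scaler0 addr0.
- by move=> x y hx hy; rewrite hpi.2 hx hy br0l.
- exact: hpiV.
move=> M f.
have [gl gb] := feval_hom (M := M) (fun w => f [set v; w]).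
pose g := feval (M := M) (fun w => f [set v; w]).
pose h := fun y => g (sv (phi y)).1.
have hgen : forall i, i \in incident E v -> h (iota i) = f i.
  move=> i iV; have iE : i \in E by move: iV; rewrite inE => /andP [].
  rewrite /h hphiE // sv_fq_Vs //=; have [w [wN ->]] := inVs_ex hE iV.
  by rewrite sig_Vs // /g feval_X.
have hon : lie_hom_on (fun x => pi x = 0) h.
  move=> a x y hx hy; split.
    by rewrite /h hphi.1; exact: gl.
  rewrite /h hphi.2.
  have := piphi x; have := piphi y; rewrite hx hy.
  case Ex: (sv (phi x)) => [p1 p2]; case Ey: (sv (phi y)) => [q1 q2] /= e2 e1.
  change (g (sdbr rho (sv (phi x)) (sv (phi y))).1 = lie_br (g p1) (g q1)).
  by rewrite Ex Ey sdbrE /= e1 e2 !(act0 hrho) oppr0 !addr0 ?fbrE /g gb.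
exists h; split; [exact: hon | exact: hgen | ].
move=> h' hon' hgen' y hy.
have jy : y = j E v iota (sv (phi y)).1.
  by rewrite -{1}(psiphi y) /psi piphi hy (lin0 hs.1) addr0.
have S0 : pi 0 = 0 by exact: (lin0 hpi.1).
have ind : forall a, pi (j E v iota a) = 0 /\ h' (j E v iota a) = h (j E v iota a).
  have [jl jb] := j_hom E v iota.
  elim/F_ind.
  - rewrite (lin0 jl) S0; split => //.
    by rewrite (hom_on0 S0 hon') (hom_on0 S0 hon).
  - move=> a x z [px ex] [pz ez]; rewrite jl; split.
      by rewrite hpi.1 px pz scaler0 addr0.
    by rewrite (hon' a _ _ px pz).1 (hon a _ _ px pz).1 ex ez.
  - move=> x z [px ex] [pz ez]; rewrite jb; split.
      by rewrite hpi.2 px pz br0l.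
    by rewrite (hon' 1 _ _ px pz).2 (hon 1 _ _ px pz).2 ex ez.
  - move=> w; rewrite jY /jf; case: ifP => wN.
      have wV := set2_in_Vs wN.
      by rewrite hpiV // hgen' // hgen.
    by rewrite S0 (hom_on0 S0 hon') (hom_on0 S0 hon).
by rewrite jy; case: (ind (sv (phi y)).1).
Qed.
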